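(* Let $n\ge 1$ and let $\mathcal{V}\subseteq\{0,1\}^n$ be a set of indicator vectors. Suppose that the primal shatter function of $\mathcal{V}$ has the $(d,d_1)$ Clarkson–Shor property for a fixed integer $d>0$ and a real $1\le d_1\le d$, with a fixed constant $C>0$. That is, for every index set $I\subseteq[n]$ with $|I|=m\le n$ and every integer $1\le k'\le m$, the number of vectors of $\mathcal{V}_{|_I}$ of length at most $k'$ is at most $C m^{d_1}k'^{\,d-d_1}$. Let $d_0$ be the VC-dimension of $\mathcal{V}$. Let $\delta$ be an integer with $1\le\delta\le n/2^{(d_0+1)}$, and let $k$ be an integer with $1\le k\le n$ and $k\ge\delta/2$. Then $$\mathcal{M}(\delta,k,\mathcal{V})=O\!\left(\frac{n^{d_1}k^{d-d_1}}{\delta^d}\right).$$ Here $\mathcal{M}(\delta,k,\mathcal{V})$ is the maximum cardinality of a $\delta$-separated subset of $\mathcal{V}$ all of whose vectors have length at most $k$. The constant of proportionality depends on $d$ (with $d_0$ and $C$ regarded as fixed) and not on $n$, $k$ or $\delta$.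
   Context: For $\mathbf{v}\in\{0,1\}^n$, its length is $\|\mathbf{v}\|=\sum_i|\mathbf{v}_i|$. The distance between two vectors is $\rho(\mathbf{u},\mathbf{v})=\sum_i|\mathbf{u}_i-\mathbf{v}_i|$, i.e. the Hamming distance. A set $\mathcal{W}$ of vectors is $\delta$-separated if $\rho(\mathbf{u},\mathbf{v})>\delta$ for all distinct $\mathbf{u},\mathbf{v}\in\mathcal{W}$. For a sequence of indices $I=(i_1,\dots,i_m)$, the projection is $\mathcal{V}_{|_I}=\{(\mathbf{v}_{i_1},\dots,\mathbf{v}_{i_m}):\mathbf{v}\in\mathcal{V}\}$, a set of distinct vectors. The primal shatter function is $\pi_{\mathcal{V}}(m)=\max_{|I|=m}|\mathcal{V}_{|_I}|$. An index sequence $I$ is shattered if $\mathcal{V}_{|_I}=\{0,1\}^{|I|}$. The VC-dimension $d_0$ is the largest size of a shattered sequence. *)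

(* Defs.v *)
From Stdlib Require Import Reals.
From mathcomp Require Import all_boot.

Set Implicit Arguments. Unset Strict Implicit. Unset Printing Implicit Defensive.

(* A vector v in {0,1}^n is represented by its support, a set {set 'I_n}. *)
Section Defs.
Variable n : nat.

Definition vlen (v : {set 'I_n}) : nat := #|v|.

Definition hdist (u v : {set 'I_n}) : nat := #|(u :\: v) :|: (v :\: u)|.

Definition separated (delta : nat) (W : {set {set 'I_n}}) : bool :=
  [forall u in W, forall v in W, (u != v) ==> (delta < hdist u v)].

Definition proj (V : {set {set 'I_n}}) (I : {set 'I_n}) : {set {set 'I_n}} :=
  [set v :&: I | v in V].

Definition shattered (V : {set {set 'I_n}}) (I : {set 'I_n}) : bool :=
  proj V I == powerset I.

Definition vcdim (V : {set {set 'I_n}}) : nat :=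
  \max_(I : {set 'I_n} | shattered V I) #|I|.

Definition Mpack (delta k : nat) (V : {set {set 'I_n}}) : nat :=
  \max_(W : {set {set 'I_n}} |
          (W \subset V) && separated delta W && [forall v in W, vlen v <= k])
     #|W|.

Local Open Scope R_scope.
Definition clarkson_shor (V : {set {set 'I_n}}) (d : nat) (d1 C : R) : Prop :=
  forall (I : {set 'I_n}) (k' : nat), (1 <= k')%N -> (k' <= #|I|)%N ->
    Rle (INR #|[set u in proj V I | (vlen u <= k')%N]|)
        (C * Rpower (INR #|I|) d1 * Rpower (INR k') (INR d - d1)).

End Defs.

(* Main.v *)
Require Import Defs.
From Stdlib Require Import Reals Lra.
From mathcomp Require Import all_boot zify.
Set Implicit Arguments. Unset Strict Implicit. Unset Printing Implicit Defensive.

Lemma eqIP n (x y A : {set 'I_n}) :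
  reflect (forall i, i \in A -> (i \in x) = (i \in y)) (x :&: A == y :&: A).
Proof.
apply: (iffP eqP) => [H i iA|H].
  by move: H => /setP /(_ i); rewrite !inE iA !andbT.
apply/setP => i; rewrite !inE; case iA: (i \in A); last by rewrite !andbF.
by rewrite !andbT H.
Qed.

Lemma shatteredP n (W : {set {set 'I_n}}) (S : {set 'I_n}) :
  reflect (forall T : {set 'I_n}, T \subset S -> exists2 w, w \in W & w :&: S = T) (shattered W S).
Proof.
rewrite /shattered eqEsubset.
have -> : proj W S \subset powerset S.
  by apply/subsetP => u /imsetP [v _ ->]; rewrite powersetE subsetIr.
apply: (iffP subsetP) => /= [H T TS|H T].
  by have := H T; rewrite powersetE => /(_ TS) /imsetP [w wW ->]; exists w.
by rewrite powersetE => /H [w wW <-]; apply/imsetP; exists w.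
Qed.

Lemma shattered_sub n (W1 W : {set {set 'I_n}}) (S : {set 'I_n}) :
  W1 \subset W -> shattered W1 S -> shattered W S.
Proof.
move=> sW /shatteredP H; apply/shatteredP => T /H [w wW <-].
by exists w => //; apply: (subsetP sW).
Qed.

Lemma shattered0 n (W : {set {set 'I_n}}) : W != set0 -> shattered W set0.
Proof.
case/set0Pn => w wW; apply/shatteredP => T; rewrite subset0 => /eqP ->.
by exists w; rewrite ?setI0.
Qed.

Definition cnt n (W : {set {set 'I_n}}) (K v : {set 'I_n}) (j : 'I_n) (b : bool) : nat :=
  #|[set w in W | (w :&: K == v) && ((j \in w) == b)]|.
Definition splitw n (W : {set {set 'I_n}}) (K : {set 'I_n}) (j : 'I_n) : nat :=
  \sum_(v : {set 'I_n}) minn (cnt W K v j true) (cnt W K v j false).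
Definition Eg n (W : {set {set 'I_n}}) (J : {set 'I_n}) : nat :=
  \sum_(j in J) splitw W (J :\ j) j.

Definition halfc n (W : {set {set 'I_n}}) (J : {set 'I_n}) (m : 'I_n)
  (w : {set 'I_n}) (b : bool) :=
  [set x in W | (x :&: J == w :&: J) && ((m \in x) == b)].
Definition W2 n (W : {set {set 'I_n}}) (J : {set 'I_n}) (m : 'I_n) :=
  [set w in W | if m \in w then #|halfc W J m w true| <= #|halfc W J m w false|
                else #|halfc W J m w false| < #|halfc W J m w true|].

Lemma W2_sub n (W : {set {set 'I_n}}) J m : W2 W J m \subset W.
Proof. by apply/subsetP => w; rewrite inE => /andP []. Qed.

Lemma card_fibers n (W : {set {set 'I_n}}) (f : {set 'I_n} -> {set 'I_n}) :
  #|W| = \sum_(v : {set 'I_n}) #|[set w in W | f w == v]|.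
Proof.
rewrite -sum1_card (partition_big f xpredT) //=.
by apply: eq_bigr => v _; rewrite -sum1_card; apply: eq_bigl => w; rewrite inE.
Qed.

Lemma W2_class n (W : {set {set 'I_n}}) J m v :
  let Y b := [set w in W | (w :&: J == v) && ((m \in w) == b)] in
  [set w in W2 W J m | w :&: J == v] =
  if #|Y true| <= #|Y false| then Y true else Y false.
Proof.
move=> Y.
have hY : forall w b, w :&: J = v -> halfc W J m w b = Y b.
  by move=> w b wv; apply/setP => x; rewrite !inE wv.
apply/setP => w; rewrite !inE.
case wv: (w :&: J == v); rewrite ?andbF ?andbT; last first.
  by case: ifP => _; rewrite /Y inE wv ?andbF.
move/eqP: wv => wv; rewrite !hY //.
have memY : forall b, (w \in Y b) = (w \in W) && ((m \in w) == b).
  by move=> b; rewrite /Y inE wv eqxx.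
case H: (#|Y true| <= #|Y false|); rewrite memY;
  case: (m \in w) => /=; rewrite ?ltnNge ?H ?andbT ?andbF //.
Qed.

Lemma card_W2 n (W : {set {set 'I_n}}) J m :
  splitw W J m = #|W2 W J m|.
Proof.
rewrite (card_fibers _ (fun w => w :&: J)); apply: eq_bigr => v _.
rewrite W2_class /cnt /=; case: ifP => H; first by rewrite (minn_idPl H).
by move/negbT: H; rewrite -ltnNge => H; rewrite (minn_idPr (ltnW H)).
Qed.

Definition Mset n (m : 'I_n) := [set w : {set 'I_n} | m \in w].

Lemma W2_classB n (W : {set {set 'I_n}}) J m (B : {set {set 'I_n}}) :
  (forall w x, w \in B -> (x \in B) = (x \in W) && (x :&: J == w :&: J)) ->
  B :&: W2 W J m = if #|B :&: Mset m| <= #|B :\: Mset m| then B :&: Mset m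
                   else B :\: Mset m.
Proof.
move=> HB.
have hY : forall w b, w \in B -> halfc W J m w b = [set x in B | (m \in x) == b].
  by move=> w b wB; apply/setP => x; rewrite /halfc !inE (HB w x wB) andbA.
apply/setP => w; rewrite !inE.
case wB: (w \in B).
2:{ by case: (#|B :&: Mset m| <= #|B :\: Mset m|); rewrite !inE wB /= ?andbF. }
have wW : w \in W by have := HB w w wB; rewrite wB eqxx andbT.
rewrite wW /= !hY //.
have -> : [set x in B | (m \in x) == true] = B :&: Mset m.
  by apply/setP => x; rewrite !inE eqb_id andbC.
have -> : [set x in B | (m \in x) == false] = B :\: Mset m.
  by apply/setP => x; rewrite !inE eqbF_neg andbC.
case H: (#|B :&: Mset m| <= #|B :\: Mset m|); rewrite !inE wB /=;
  case: (m \in w) => //=; rewrite ltnNge H //.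
Qed.

Lemma eqI_split n (x y J : {set 'I_n}) j : j \in J ->
  (x :&: J == y :&: J) = (x :&: (J :\ j) == y :&: (J :\ j)) && ((j \in x) == (j \in y)).
Proof.
move=> jJ; apply/eqIP/andP => [H|[/eqIP H /eqP Hj] i iJ].
  split; last by rewrite H.
  by apply/eqIP => i; rewrite inE => /andP [_]; apply: H.
case: (eqVneq i j) => [->//|ij]; apply: H; by rewrite !inE ij.
Qed.

Lemma setU1_eq n (A v : {set 'I_n}) m : m \notin A -> m \notin v ->
  (m |: A == m |: v) = (A == v).
Proof.
move=> mA mv; apply/eqP/eqP => [H|->//].
by rewrite -(setU1K mA) H setU1K.
Qed.

Lemma key_eq n (w K v : {set 'I_n}) m : m \notin K -> m \notin v ->
  ((w :&: (K :|: [set m]) == v) = (w :&: K == v) && (m \notin w)) /\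
  ((w :&: (K :|: [set m]) == m |: v) = (w :&: K == v) && (m \in w)).
Proof.
move=> mK mv; rewrite setIUr.
have mA : m \notin w :&: K by rewrite inE negb_and mK orbT.
case mw: (m \in w) => /=.
  have -> : w :&: [set m] = [set m].
    by apply/setP => i; rewrite !inE; case: (eqVneq i m) => [->|]; rewrite ?mw ?andbF.
  rewrite setUC setU1_eq // andbT andbF; split => //.
  by apply/negbTE; apply: contraNneq mv => <-; rewrite setU11.
have -> : w :&: [set m] = set0.
  by apply/setP => i; rewrite !inE; case: (eqVneq i m) => [->|]; rewrite ?mw ?andbF.
rewrite setU0 andbT andbF; split => //.
by apply/negbTE; apply: contraNneq mA => ->; rewrite setU11.
Qed.

Lemma setU1D1 n (v : {set 'I_n}) m : ((m |: v) :\ m == v) = (m \notin v).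
Proof.
case mv: (m \in v) => /=; last by rewrite setU1K ?mv ?eqxx.
apply/negbTE; apply: contraTneq mv => <-; by rewrite !inE eqxx.
Qed.

Lemma setI_sub (T : finType) (X W : {set T}) (P : pred T) :
  X \subset W -> [set w in X | P w] = [set w in W | P w] :&: X.
Proof.
move=> sXW; apply/setP => w; rewrite !inE.
case wX: (w \in X); rewrite ?andbF ?andbT //=.
by rewrite (subsetP sXW _ wX).
Qed.

Lemma setD_sub (T : finType) (X W : {set T}) (P : pred T) :
  [set w in W :\: X | P w] = [set w in W | P w] :\: X.
Proof.
apply/setP => w; rewrite !inE.
by case: (w \in X); rewrite ?andbF ?andbT.
Qed.

Lemma split_step n (W : {set {set 'I_n}}) (J : {set 'I_n}) (m j : 'I_n) :
  m \notin J -> j \in J ->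
  splitw W ((J :\ j) :|: [set m]) j <=
  splitw (W :\: W2 W J m) (J :\ j) j + splitw (W2 W J m) (J :\ j) j.
Proof.
move=> mJ jJ; set K := J :\ j.
have mK : m \notin K by rewrite inE negb_and mJ orbT.
rewrite /splitw (bigID (fun v : {set 'I_n} => m \in v)) /=.
rewrite (reindex_onto (fun v => m |: v) (fun v => v :\ m)) /=; last first.
  by move=> v mv; rewrite setD1K.
under eq_bigl do rewrite setU11 setU1D1 /=.
rewrite -big_split /= -big_split /= [X in _ <= X](bigID (fun v : {set 'I_n} => m \in v)) /=.
apply: leq_trans (leq_addl _ _).
apply: leq_sum => v mv.
set B := fun e => [set w in W | (w :&: K == v) && ((j \in w) == e)].
have e1 : forall e, cnt W (K :|: [set m]) (m |: v) j e = #|B e :&: Mset m|.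
  move=> e; rewrite /cnt; apply: eq_card => w.
  rewrite !inE (key_eq w mK mv).2; case: (w \in W); case: (m \in w); 
  by rewrite ?andbT ?andbF.
have e0 : forall e, cnt W (K :|: [set m]) v j e = #|B e :\: Mset m|.
  move=> e; rewrite /cnt; apply: eq_card => w.
  rewrite !inE (key_eq w mK mv).1; case: (w \in W); case: (m \in w);
  by rewrite ?andbT ?andbF.
have cls : forall e, (forall w x, w \in B e ->
    (x \in B e) = (x \in W) && (x :&: J == w :&: J)).
  move=> e w x; rewrite !inE => /andP [_ /andP [/eqP wv /eqP we]].
  by rewrite (eqI_split _ _ jJ) -/K wv we.
have c2 : forall e, cnt (W2 W J m) K v j e = #|B e :&: W2 W J m|.
  by move=> e; rewrite /cnt (setI_sub _ (W2_sub W J m)).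
have c1 : forall e, cnt (W :\: W2 W J m) K v j e = #|B e :\: W2 W J m|.
  by move=> e; rewrite /cnt setD_sub.
rewrite !e1 !e0 !c1 !c2.
have s2 : forall e, #|B e :&: W2 W J m| = minn #|B e :&: Mset m| #|B e :\: Mset m|.
  move=> e; rewrite (W2_classB m (cls e)); case: ifP => H; first by rewrite (minn_idPl H).
  by move/negbT: H; rewrite -ltnNge => H; rewrite (minn_idPr (ltnW H)).
have s1 : forall e, #|B e :\: W2 W J m| = maxn #|B e :&: Mset m| #|B e :\: Mset m|.
  move=> e; have := cardsID (W2 W J m) (B e); have := cardsID (Mset m) (B e).
  rewrite s2; move: #|B e :&: Mset m| #|B e :\: Mset m| #|B e| #|B e :\: W2 W J m| => a b c d2; lia.
rewrite !s1 !s2.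
move: #|B true :&: Mset m| #|B true :\: Mset m| #|B false :&: Mset m| #|B false :\: Mset m|.
move=> a b c d'; lia.
Qed.

Lemma W2_shatter n (W : {set {set 'I_n}}) (J S : {set 'I_n}) m :
  m \notin J -> S \subset J -> shattered (W2 W J m) S -> shattered W (m |: S).
Proof.
move=> mJ SJ /shatteredP H; apply/shatteredP => T TS.
have mS : m \notin S by apply: contra mJ; apply: (subsetP SJ).
have TS' : T :\ m \subset S by rewrite subDset.
have [w2 w2W2 w2T] := H (T :\ m) TS'.
have both : forall b, exists2 w, w \in W & (w :&: J == w2 :&: J) && ((m \in w) == b).
  move: w2W2; rewrite inE => /andP [w2W].
  have hw2 : forall b, ((m \in w2) == b) -> w2 \in halfc W J m w2 b.
    by move=> b hb; rewrite inE w2W eqxx hb.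
  move=> Hc b.
  suff : halfc W J m w2 b != set0.
    by case/set0Pn => x; rewrite inE => /andP [xW hx]; exists x.
  rewrite -card_gt0.
  have g : forall b, (m \in w2) == b -> 0 < #|halfc W J m w2 b|.
    by move=> b' hb; rewrite card_gt0; apply/set0Pn; exists w2; apply: hw2.
  case: b; case mw: (m \in w2) Hc => Hc.
  - by apply: g; rewrite mw.
  - exact: leq_ltn_trans Hc.
  - by apply: leq_trans Hc; apply: g; rewrite mw.
  - by apply: g; rewrite mw.
have [w wW /andP [/eqP wJ /eqP wm]] := both (m \in T).
exists w => //.
apply/setP => i; rewrite !inE.
case: (eqVneq i m) => [->|im]; first by rewrite wm andbT.
case iS: (i \in S) => /=; last first.
  rewrite andbF; apply/esym/negbTE; apply: contraFN iS => iT; have := subsetP TS i iT; by rewrite !inE (negbTE im).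
have iJ : i \in J by apply: (subsetP SJ).
have : i \in w :&: J = (i \in w2 :&: J) by rewrite wJ.
rewrite !inE iJ !andbT => ->.
move: w2T => /setP /(_ i); rewrite !inE iS im andbT /= => ->.
by [].
Qed.

Lemma edge_bound n t : forall (J : {set 'I_n}), #|J| = t ->
  forall d (W : {set {set 'I_n}}),
  (forall S : {set 'I_n}, S \subset J -> shattered W S -> #|S| <= d) -> Eg W J <= d * #|W|.
Proof.
elim: t => [|t IH] J cJ d W HW.
  by rewrite (cards0_eq cJ) /Eg big_set0.
have : 0 < #|J| by rewrite cJ.
rewrite card_gt0 => /set0Pn [m mJ].
set J' := J :\ m.
have cJ' : #|J'| = t by move: (cardsD1 m J); rewrite mJ cJ add1n => -[].
have mJ' : m \notin J' by rewrite setD11.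
have sJ' : J' \subset J by apply: subD1set.
rewrite /Eg (bigD1 m) //=.
rewrite (eq_bigl (fun j => j \in J')); last by move=> j; rewrite !inE andbC.
rewrite card_W2 -/J'.
set V2 := W2 W J' m.
have e : forall j, j \in J' -> J :\ j = (J' :\ j) :|: [set m].
  move=> j jJ'; apply/setP => i; rewrite !inE.
  case: (eqVneq i m) => [->|im] /=; last by rewrite orbF.
  rewrite mJ andbT orbT; apply: contraNneq mJ' => ->; exact: jJ'.
have step : \sum_(j in J') splitw W (J :\ j) j <= Eg (W :\: V2) J' + Eg V2 J'.
  rewrite /Eg -big_split /=; apply: leq_sum => j jJ'.
  by rewrite e //; apply: split_step.
have h1 : Eg (W :\: V2) J' <= d * #|W :\: V2|.
  apply: (IH _ cJ') => S SJ' sh; apply: HW; first exact: subset_trans SJ' sJ'.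
  by apply: shattered_sub sh; apply: subsetDl.
have h2S : forall S : {set 'I_n}, S \subset J' -> shattered V2 S -> #|S| + 1 <= d.
  move=> S SJ' sh.
  have mS : m \notin S by apply: contra mJ'; apply: (subsetP SJ').
  have := HW (m |: S); rewrite cardsU1 mS add1n addn1; apply.
    by rewrite subUset sub1set mJ (subset_trans SJ' sJ').
  exact: W2_shatter mJ' SJ' sh.
have h2 : Eg V2 J' <= d.-1 * #|V2|.
  apply: (IH _ cJ') => S SJ' sh; have := h2S S SJ' sh; lia.
have cW : #|W| = #|W :\: V2| + #|V2|.
  by have := cardsID V2 W; rewrite (setIidPr (W2_sub W J' m)); move=> H; rewrite -H -/V2 addnC.
rewrite cW.
case: (eqVneq V2 set0) => [E|NE].
  move: h1 h2 step; rewrite E cards0; lia.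
have d1 : 1 <= d.
  have := h2S set0 (sub0set _) (shattered0 NE); rewrite cards0; lia.
clear HW h2S; move: h1 h2 step; case: d d1 => // d' _ /=; nia.
Qed.

Lemma sum_ind (T : finType) (B : {set T}) : \sum_(x : T) (x \in B : nat) = #|B|.
Proof.
rewrite -sum1_card [RHS]big_mkcond /=; apply: eq_bigr => x _; by case: (x \in B).
Qed.

Lemma sum_ind_in (T : finType) (A B : {set T}) :
  \sum_(x in A) (x \in B : nat) = #|A :&: B|.
Proof.
rewrite big_mkcond /= -sum_ind; apply: eq_bigr => x _; rewrite inE.
by case: (x \in A); case: (x \in B).
Qed.

Lemma hdistE n (x y : {set 'I_n}) : hdist x y = #|x :\: y| + #|y :\: x|.
Proof.
rewrite /hdist cardsU.
have -> : (x :\: y) :&: (y :\: x) = set0.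
  apply/setP => i; rewrite !inE; by case: (i \in x); case: (i \in y); rewrite ?andbF.
by rewrite cards0 subn0.
Qed.

Lemma class_bound n (delta : nat) (A : {set {set 'I_n}}) :
  (forall x y, x \in A -> y \in A -> x != y -> delta < hdist x y) ->
  delta * (#|A| - 1) <=
  2 * \sum_(j : 'I_n) minn #|A :&: Mset j| #|A :\: Mset j|.
Proof.
move=> Hsep; set a := #|A|.
have hpq : forall j : 'I_n, #|A :&: Mset j| * #|A :\: Mset j| <=
    a * minn #|A :&: Mset j| #|A :\: Mset j|.
  move=> j; have := cardsID (Mset j) A; rewrite -/a => <-.
  move: #|A :&: Mset j| #|A :\: Mset j| => p q.
  case: (leqP p q) => h; nia.
have spq : \sum_(j : 'I_n) #|A :&: Mset j| * #|A :\: Mset j| =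
           \sum_(x in A) \sum_(y in A) #|x :\: y|.
  have p1 : forall j : 'I_n, #|A :&: Mset j| = \sum_(x in A) (j \in x : nat).
    move=> j; rewrite -sum_ind_in; apply: eq_bigr => x _; by rewrite inE.
  have p2 : forall j : 'I_n, #|A :\: Mset j| = \sum_(y in A) (j \notin y : nat).
    move=> j; rewrite setDE -sum_ind_in; apply: eq_bigr => x _; by rewrite !inE.
  rewrite (eq_bigr (fun j => \sum_(x in A) \sum_(y in A) ((j \in x) * (j \notin y) : nat))); last first.
    move=> j _; rewrite p1 p2 big_distrl /=; apply: eq_bigr => x _; by rewrite big_distrr.
  rewrite exchange_big /=; apply: eq_bigr => x _.
  rewrite exchange_big /=; apply: eq_bigr => y _.
  rewrite -sum_ind; apply: eq_bigr => j _; rewrite mulnb !inE; by case: (j \in x); case: (j \in y).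
have shd : \sum_(x in A) \sum_(y in A) hdist x y =
           2 * \sum_(x in A) \sum_(y in A) #|x :\: y|.
  under eq_bigr do under eq_bigr do rewrite hdistE.
  under eq_bigr do rewrite big_split /=.
  rewrite big_split /= [X in _ + X = _]exchange_big /=; lia.
have lhd : a * ((a - 1) * delta.+1) <= \sum_(x in A) \sum_(y in A) hdist x y.
  rewrite /a -sum_nat_const; apply: leq_sum => x xA.
  rewrite (bigD1 x) //=; apply: leq_trans (leq_addl _ _).
  have -> : #|A| - 1 = #|A :\ x| by rewrite (cardsD1 x A) xA add1n subn1.
  rewrite -sum_nat_const [X in X <= _](eq_bigl (fun y => (y \in A) && (y != x))); last first.
    by move=> y; rewrite !inE andbC.
  by apply: leq_sum => y /andP [yA yx]; apply: Hsep => //; rewrite eq_sym.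
have key : a * (delta * (a - 1)) <= a * (2 * \sum_(j : 'I_n) minn #|A :&: Mset j| #|A :\: Mset j|).
  apply: leq_trans (_ : a * ((a - 1) * delta.+1) <= _); first by nia.
  apply: (leq_trans lhd); rewrite shd -spq mulnCA leq_mul2l; apply/orP; right; rewrite big_distrr /=.
  by apply: leq_sum => j _; exact: hpq.
case: (posnP a) => [->|apos]; first by rewrite muln0.
by rewrite leq_pmul2l in key.
Qed.

Lemma sepP n delta (W : {set {set 'I_n}}) : separated delta W ->
  forall x y, x \in W -> y \in W -> x != y -> delta < hdist x y.
Proof.
move=> /forallP H x y xW yW xy.
by move: (H x) => /implyP /(_ xW) /forallP /(_ y) /implyP /(_ yW) /implyP /(_ xy).
Qed.

Lemma splitw_in n (W : {set {set 'I_n}}) (I : {set 'I_n}) j : j \in I -> splitw W I j = 0.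
Proof.
move=> jI; rewrite /splitw big1 // => v _.
have z : forall b, (j \in v) = b -> cnt W I v j (~~ b) = 0.
  move=> b jv; apply/eqP; rewrite cards_eq0; apply/eqP/setP => w; rewrite !inE.
  case: (eqVneq (w :&: I) v) => [E|]; rewrite ?andbF //=.
  move: jv; rewrite -E !inE jI andbT => ->; by case: b; rewrite /= ?eqxx ?andbF.
case jv: (j \in v).
  by rewrite (z true jv) /= minn0.
by rewrite (z false jv) /= min0n.
Qed.

Lemma lower n delta (W : {set {set 'I_n}}) (I : {set 'I_n}) : separated delta W ->
  delta * (#|W| - #|proj W I|) <= 2 * \sum_(j | j \notin I) splitw W I j.
Proof.
move=> sep.
have E : \sum_(j | j \notin I) splitw W I j = \sum_j splitw W I j.
  rewrite [RHS](bigID (fun j => j \in I)) /= [X in _ = X + _]big1 ?add0n // => j; exact: splitw_in.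
rewrite E /splitw exchange_big /=.
set A := fun v => [set w in W | w :&: I == v].
have c1 : forall v j, cnt W I v j true = #|A v :&: Mset j|.
  move=> v j; apply: eq_card => w; rewrite !inE; by case: (j \in w); rewrite ?andbT ?andbF.
have c0 : forall v j, cnt W I v j false = #|A v :\: Mset j|.
  move=> v j; apply: eq_card => w; rewrite !inE; by case: (j \in w); rewrite ?andbT ?andbF.
have cb : forall v, delta * (#|A v| - 1) <= 2 * \sum_j minn (cnt W I v j true) (cnt W I v j false).
  move=> v; under eq_bigr do rewrite c1 c0.
  apply: class_bound => x y; rewrite !inE => /andP [xW _] /andP [yW _].
  exact: sepP sep x y xW yW.
have cW : #|W| = \sum_v #|A v| by exact: card_fibers.
have cP : #|proj W I| = \sum_v (v \in proj W I : nat) by rewrite sum_ind.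
have hs : #|W| <= \sum_v (#|A v| - 1) + #|proj W I|.
  rewrite cW cP -big_split /=; apply: leq_sum => v _.
  case: (posnP #|A v|) => [->//|pos].
  have -> : v \in proj W I.
    move: pos; rewrite card_gt0 => /set0Pn [w]; rewrite inE => /andP [wW /eqP <-].
    by apply/imsetP; exists w.
  by rewrite /=; lia.
apply: leq_trans (_ : delta * \sum_v (#|A v| - 1) <= _).
  by rewrite leq_mul2l; apply/orP; right; rewrite leq_subLR addnC.
rewrite big_distrr big_distrr /=; apply: leq_sum => v _; exact: cb.
Qed.

Lemma dcount n (g : {set 'I_n} -> 'I_n -> nat) m :
  \sum_(I : {set 'I_n} | #|I| == m) \sum_(j | j \notin I) g I j =
  \sum_(J : {set 'I_n} | #|J| == m.+1) \sum_(j in J) g (J :\ j) j.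
Proof.
rewrite (exchange_big_dep xpredT) //= [RHS](exchange_big_dep xpredT) //=.
apply: eq_bigr => j _.
rewrite [RHS](reindex_onto (fun I => j |: I) (fun J => J :\ j)) /=; last first.
  by move=> J /andP [_ jJ]; rewrite setD1K.
apply: eq_big => I.
  rewrite setU11 andbT setU1D1 cardsU1.
  by case: (j \in I) => /=; rewrite ?andbF ?andbT ?add1n ?eqSS.
by move=> /andP [_ jI]; rewrite setU1K.
Qed.

Lemma count_rel n m :
  (\sum_(I : {set 'I_n} | #|I| == m) 1) * (n - m) =
  (\sum_(J : {set 'I_n} | #|J| == m.+1) 1) * m.+1.
Proof.
rewrite !big_distrl /=.
transitivity (\sum_(I : {set 'I_n} | #|I| == m) \sum_(j | j \notin I) 1).
  apply: eq_bigr => I /eqP cI; rewrite mul1n.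
  rewrite (eq_bigl (fun j => j \in ~: I)); last by move=> j; rewrite inE.
  rewrite sum1_card; have := cardsC I; rewrite card_ord cI; lia.
rewrite dcount; apply: eq_bigr => J /eqP cJ; by rewrite sum1_card cJ mul1n.
Qed.

Lemma haussler n d0 delta (W : {set {set 'I_n}}) m :
  separated delta W -> (forall S : {set 'I_n}, shattered W S -> #|S| <= d0) ->
  4 * d0 * n <= delta * m.+1 -> 0 < delta ->
  (\sum_(I : {set 'I_n} | #|I| == m) 1) * #|W| <=
  2 * \sum_(I : {set 'I_n} | #|I| == m) #|proj W I|.
Proof.
move=> sep vc hq dpos.
set sm := \sum_(I : {set 'I_n} | #|I| == m) 1.
set ss := \sum_(J : {set 'I_n} | #|J| == m.+1) 1.
set N := #|W|.
set X := \sum_(I : {set 'I_n} | #|I| == m) (N - #|proj W I|).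
set P := \sum_(I : {set 'I_n} | #|I| == m) #|proj W I|.
have hXP : sm * N <= X + P.
  rewrite /sm /X /P big_distrl -big_split /=; apply: leq_sum => I _; lia.
have hlow : delta * X <= 2 * \sum_(J : {set 'I_n} | #|J| == m.+1) Eg W J.
  rewrite /X /Eg -dcount big_distrr big_distrr /=; apply: leq_sum => I _.
  exact: lower.
have hup : \sum_(J : {set 'I_n} | #|J| == m.+1) Eg W J <= ss * (d0 * N).
  rewrite /ss big_distrl /=; apply: leq_sum => J _; rewrite mul1n.
  by apply: (edge_bound (erefl #|J|)) => S _; apply: vc.
have cr := count_rel n m; rewrite -/sm -/ss in cr.
have h1 : delta * m.+1 * X <= 2 * d0 * N * (sm * n).
  rewrite mulnAC.
  apply: leq_trans (_ : 2 * (ss * (d0 * N)) * m.+1 <= _).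
    rewrite leq_mul2r; apply/orP; right; apply: leq_trans hlow _.
    by rewrite leq_mul2l hup orbT.
  have -> : 2 * (ss * (d0 * N)) * m.+1 = 2 * d0 * N * (ss * m.+1) by nia.
  by rewrite leq_mul2l -cr leq_mul2l leq_subr !orbT.
have h2 : 2 * X <= sm * N.
  have qpos : 0 < delta * m.+1 by rewrite muln_gt0 dpos.
  rewrite -(leq_pmul2l qpos).
  apply: leq_trans (_ : 4 * d0 * n * (sm * N) <= _); last by rewrite leq_mul2r hq orbT.
  have -> : delta * m.+1 * (2 * X) = 2 * (delta * m.+1 * X) by nia.
  have -> : 4 * d0 * n * (sm * N) = 2 * (2 * d0 * N * (sm * n)) by nia.
  by rewrite leq_mul2l h1 orbT.
move: h2 hXP; move: (sm * N) => K; lia.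
Qed.


Lemma Trec n (w : {set 'I_n}) m :
  \sum_(I : {set 'I_n} | #|I| == m.+1) #|w :&: I| +
  \sum_(I : {set 'I_n} | #|I| == m) #|w :&: I| =
  #|w| * \sum_(I : {set 'I_n} | #|I| == m) 1.
Proof.
have := dcount (fun _ j => (j \in w : nat)) m => /= H.
have L : forall I : {set 'I_n}, \sum_(j | j \notin I) (j \in w : nat) = #|w :\: I|.
  move=> I; rewrite big_mkcond /= -sum_ind; apply: eq_bigr => j _; rewrite !inE.
  by case: (j \in I); case: (j \in w).
have R : forall J : {set 'I_n}, \sum_(j in J) (j \in w : nat) = #|w :&: J|.
  by move=> J; rewrite sum_ind_in setIC.
under eq_bigr do rewrite -R.
rewrite -H big_distrr -big_split /=; apply: eq_bigr => I _.
by rewrite L muln1 addnC cardsID.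
Qed.

Lemma Tval n (w : {set 'I_n}) m :
  n * \sum_(I : {set 'I_n} | #|I| == m) #|w :&: I| =
  #|w| * m * \sum_(I : {set 'I_n} | #|I| == m) 1.
Proof.
elim: m => [|m IH].
  rewrite muln0 mul0n big1 ?muln0 // => I /eqP /cards0_eq ->; by rewrite setI0 cards0.
have := Trec w m; have := count_rel n m.
move: IH; set T0 := \sum_(I : {set 'I_n} | #|I| == m) #|w :&: I|.
set T1 := \sum_(I : {set 'I_n} | #|I| == m.+1) #|w :&: I|.
set s0 := \sum_(I : {set 'I_n} | #|I| == m) 1.
set s1 := \sum_(I : {set 'I_n} | #|I| == m.+1) 1.
move=> IH cr tr.
have : n * T1 + n * T0 = n * (#|w| * s0) by rewrite -mulnDr tr.
rewrite IH => H.
have -> : #|w| * m.+1 * s1 = #|w| * (s1 * m.+1) by nia.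
rewrite -cr.
case: (leqP m n) => mn.
  have : n * (#|w| * s0) = (n - m) * (#|w| * s0) + m * (#|w| * s0).
    by rewrite -mulnDl subnK.
  nia.
have -> : n - m = 0 by lia.
nia.
Qed.

Definition longc n (W : {set {set 'I_n}}) (I : {set 'I_n}) k' :=
  #|[set w in W | k' < #|w :&: I|]|.

Lemma card_sum_pred (T : finType) (A : {set T}) (P : pred T) :
  #|[set x in A | P x]| = \sum_(x in A) (P x : nat).
Proof.
have -> : \sum_(x in A) (P x : nat) = \sum_(x in A) (x \in [set x | P x] : nat).
  by apply: eq_bigr => x _; rewrite inE.
rewrite sum_ind_in; apply: eq_card => x; by rewrite !inE.
Qed.

Lemma long_bound n (W : {set {set 'I_n}}) k k' m :
  (forall w, w \in W -> #|w| <= k) -> (m <= k' \/ 4 * k * m < n * k'.+1) ->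
  4 * \sum_(I : {set 'I_n} | #|I| == m) longc W I k' <=
  (\sum_(I : {set 'I_n} | #|I| == m) 1) * #|W|.
Proof.
move=> Wk [mk|hk].
  rewrite big1 ?muln0 // => I /eqP cI; apply/eqP; rewrite cards_eq0; apply/eqP/setP => w.
  rewrite !inE; apply/negbTE; rewrite negb_and -leqNgt; apply/orP; right.
  by apply: leq_trans (subset_leq_card (subsetIr w I)) _; rewrite cI.
set sm := \sum_(I : {set 'I_n} | #|I| == m) 1.
have L : \sum_(I : {set 'I_n} | #|I| == m) longc W I k' =
         \sum_(w in W) \sum_(I : {set 'I_n} | #|I| == m) (k' < #|w :&: I| : nat).
  rewrite exchange_big /=; apply: eq_bigr => I _; rewrite /longc.
  by rewrite card_sum_pred.
have M : forall w, w \in W ->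
    n * k'.+1 * \sum_(I : {set 'I_n} | #|I| == m) (k' < #|w :&: I| : nat) <= k * m * sm.
  move=> w wW.
  apply: leq_trans (_ : n * \sum_(I : {set 'I_n} | #|I| == m) #|w :&: I| <= _).
    rewrite -mulnA leq_mul2l; apply/orP; right.
    rewrite big_distrr /=; apply: leq_sum => I _.
    by case: ltnP => h; rewrite ?muln1 ?muln0.
  rewrite Tval -/sm; rewrite !leq_mul2r; apply/orP; right; apply/orP; right.
  exact: Wk.
have npos : 0 < n * k'.+1 by apply: leq_ltn_trans hk.
rewrite -(leq_pmul2l npos).
apply: leq_trans (_ : 4 * (k * m * sm * #|W|) <= _).
  rewrite mulnCA leq_mul2l; apply/orP; right.
  rewrite L big_distrr /=.
  apply: leq_trans (_ : \sum_(w in W) k * m * sm <= _).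
    by apply: leq_sum => w wW; apply: M.
  by rewrite sum_nat_const mulnC.
have : 4 * k * m * (sm * #|W|) <= n * k'.+1 * (sm * #|W|) by rewrite leq_mul2r ltnW ?orbT.
nia.
Qed.

Lemma proj_split n (V W : {set {set 'I_n}}) (I : {set 'I_n}) k' :
  W \subset V ->
  #|proj W I| <= #|[set u in proj V I | vlen u <= k']| + longc W I k'.
Proof.
move=> WV.
have sub : proj W I \subset [set u in proj V I | vlen u <= k'] :|:
           [set w :&: I | w in [set w in W | k' < #|w :&: I|]].
  apply/subsetP => u /imsetP [w wW ->]; rewrite !inE.
  case: (leqP #|w :&: I| k') => h.
    apply/orP; left; rewrite andbT; apply/imsetP; exists w => //; exact: (subsetP WV).
  by rewrite andbF /=; apply/imsetP; exists w => //; rewrite inE wW h.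
apply: leq_trans (subset_leq_card sub) _.
rewrite cardsU; apply: leq_trans (leq_subr _ _) _.
by rewrite leq_add2l /longc leq_imset_card.
Qed.

Lemma main_nat n d0 delta k k' (V W : {set {set 'I_n}}) m :
  W \subset V -> separated delta W ->
  (forall S : {set 'I_n}, shattered W S -> #|S| <= d0) ->
  4 * d0 * n <= delta * m.+1 -> 0 < delta ->
  (forall w, w \in W -> #|w| <= k) ->
  (m <= k' \/ 4 * k * m < n * k'.+1) -> m <= n ->
  exists I : {set 'I_n}, #|I| = m /\
    #|W| <= 4 * #|[set u in proj V I | vlen u <= k']|.
Proof.
move=> WV sep vc hq dpos Wk hk mn.
set sh := fun I : {set 'I_n} => #|[set u in proj V I | vlen u <= k']|.
have H1 := haussler sep vc hq dpos.
have H2 : \sum_(I : {set 'I_n} | #|I| == m) #|proj W I| <=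
          \sum_(I : {set 'I_n} | #|I| == m) sh I +
          \sum_(I : {set 'I_n} | #|I| == m) longc W I k'.
  by rewrite -big_split /=; apply: leq_sum => I _; apply: proj_split.
have H3 := long_bound Wk hk.
set sm := \sum_(I : {set 'I_n} | #|I| == m) 1 in H1 H3.
have H4 : sm * #|W| <= 4 * \sum_(I : {set 'I_n} | #|I| == m) sh I.
  move: H1 H2 H3; move: (sm * #|W|) => K; lia.
have smE : sm = #|[set I : {set 'I_n} | #|I| == m]|.
  by rewrite /sm -sum1_card; apply: eq_bigl => I; rewrite inE.
have smpos : 0 < sm by rewrite smE card_draws card_ord bin_gt0.
have [I0 I0m] : exists I0 : {set 'I_n}, #|I0| == m.
  by move: smpos; rewrite smE card_gt0 => /set0Pn [I]; rewrite inE => ?; exists I.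
case: (boolP [exists I : {set 'I_n}, (#|I| == m) && (#|W| <= 4 * sh I)]).
  by case/existsP => I /andP [/eqP ? ?]; exists I.
rewrite negb_exists => /forallP Hn.
have hI : forall I : {set 'I_n}, #|I| == m -> 4 * sh I < #|W|.
  by move=> I Im; have := Hn I; rewrite Im /= -ltnNge.
have Npos : 0 < #|W| by have := hI I0 I0m; lia.
have : 4 * \sum_(I : {set 'I_n} | #|I| == m) sh I <= sm * (#|W| - 1).
  rewrite big_distrr /sm big_distrl /=; apply: leq_sum => I Im.
  rewrite mul1n; move: (hI I Im); move: (sh I) (#|W|) => x y. lia.
rewrite mulnBr muln1.
have : sm <= sm * #|W| by rewrite leq_pmulr.
move: H4 smpos; move: (sm * #|W|) (4 * \sum_(I : {set 'I_n} | #|I| == m) sh I) => a b.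
lia.
Qed.

Unset Implicit Arguments.

Lemma ar1 (A q r dl : nat) : A = q * dl + r -> r < dl -> A <= dl * q.+2.
Proof. move=> -> h; rewrite !mulnS; lia. Qed.

Lemma ar2 (d0 n q r dl : nat) : 4 * d0 * n = q * dl + r -> 8 * d0 + 8 < dl ->
  2 * dl <= n -> q.+1 <= n.
Proof.
move=> e h1 h2; rewrite ltnNge; apply/negP => hq.
have : n * dl <= q * dl by rewrite leq_mul2r hq orbT.
have : n * (8 * d0 + 9) <= n * dl by rewrite leq_mul2l; apply/orP; right; lia.
nia.
Qed.

Lemma ar3 (d0 n q r dl : nat) : 4 * d0 * n = q * dl + r -> dl <= n ->
  q.+1 * dl <= (4 * d0 + 1) * n.
Proof. move=> e h; rewrite mulSn mulnDl mul1n; lia. Qed.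

Lemma ar4 (d0 k n : nat) : 4 * k * ((4 * d0 + 1) * n) = (16 * d0 + 4) * k * n.
Proof. nia. Qed.

Local Open Scope R_scope.

Lemma INR_le_mul (a b c e : nat) : (a * b <= c * e)%N -> INR a * INR b <= INR c * INR e.
Proof. move=> h; rewrite -!mult_INR; apply: le_INR; apply/leP; exact: h. Qed.

Lemma real_step (C : R) (a m k' n k delta d : nat) (d1 : R) :
  0 < C -> 1 <= d1 -> d1 <= INR d -> (0 < m)%N -> (0 < k')%N -> (0 < n)%N ->
  (0 < k)%N -> (0 < delta)%N -> (0 < a)%N ->
  (m * delta <= a * n)%N -> (k' * delta <= a * k)%N ->
  C * Rpower (INR m) d1 * Rpower (INR k') (INR d - d1) <=
  C * (INR a ^ d / INR delta ^ d) *
    (Rpower (INR n) d1 * Rpower (INR k) (INR d - d1)).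
Proof.
move=> Cp d1a d1b mp kp np kp2 dp ap hm hk.
have pos : forall x : nat, (0 < x)%N -> 0 < INR x.
  move=> x hx; apply: lt_0_INR; apply/ltP; exact: hx.
have Pm := pos _ mp; have Pk' := pos _ kp; have Pn := pos _ np.
have Pk := pos _ kp2; have Pd := pos _ dp; have Pa := pos _ ap.
set t := INR a / INR delta.
have tp : 0 < t by rewrite /t; apply: Rdiv_lt_0_compat.
have bm : INR m <= t * INR n.
  have := INR_le_mul _ _ _ _ hm; rewrite /t => h.
  apply (Rmult_le_reg_r (INR delta)) => //.
  field_simplify; lra.
have bk : INR k' <= t * INR k.
  have := INR_le_mul _ _ _ _ hk; rewrite /t => h.
  apply (Rmult_le_reg_r (INR delta)) => //.
  field_simplify; lra.
have r1 : Rpower (INR m) d1 <= Rpower t d1 * Rpower (INR n) d1.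
  rewrite Rpower_mult_distr //; apply: Rle_Rpower_l; lra.
have r2 : Rpower (INR k') (INR d - d1) <= Rpower t (INR d - d1) * Rpower (INR k) (INR d - d1).
  rewrite Rpower_mult_distr //; apply: Rle_Rpower_l; lra.
have tE : Rpower t d1 * Rpower t (INR d - d1) = INR a ^ d / INR delta ^ d.
  rewrite -Rpower_plus.
  have -> : d1 + (INR d - d1) = INR d by ring.
  by rewrite Rpower_pow // /t /Rdiv Rpow_mult_distr pow_inv.
have e1 : 0 <= Rpower (INR m) d1 by apply: Rlt_le; apply: exp_pos.
have e2 : 0 <= Rpower (INR k') (INR d - d1) by apply: Rlt_le; apply: exp_pos.
have := Rmult_le_compat _ _ _ _ e1 e2 r1 r2.
rewrite -tE => h.
have -> : C * (Rpower t d1 * Rpower t (INR d - d1)) *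
    (Rpower (INR n) d1 * Rpower (INR k) (INR d - d1)) =
    C * ((Rpower t d1 * Rpower (INR n) d1) *
    (Rpower t (INR d - d1) * Rpower (INR k) (INR d - d1))) by ring.
rewrite Rmult_assoc; apply: Rmult_le_compat_l; lra.
Qed.

Theorem theorem2 :
  forall (d : nat) (C : R) (d0 : nat),
    (0 < d)%N -> 0 < C ->
    exists c : R, 0 < c /\
      forall (d1 : R) (n : nat) (V : {set {set 'I_n}}) (delta k : nat),
        1 <= d1 -> d1 <= INR d ->
        (1 <= n)%N ->
        clarkson_shor V d d1 C ->
        vcdim V = d0 ->
        (1 <= delta)%N -> INR delta <= INR n / 2 ^ (d0 + 1) ->
        (1 <= k)%N -> (k <= n)%N -> (delta <= 2 * k)%N ->
        INR (Mpack delta k V)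
          <= c * (Rpower (INR n) d1 * Rpower (INR k) (INR d - d1)
                  / INR delta ^ d).
Proof.
move=> d C d0 dpos Cpos.
pose a := (16 * d0 + 6)%N.
pose D := (8 * d0 + 8)%N.
have pos : forall x : nat, (0 < x)%N -> 0 < INR x.
  move=> x hx; apply: lt_0_INR; apply/ltP; exact: hx.
have Pa : 0 < INR a by apply: pos; rewrite /a addnS.
have PD : 0 < INR D by apply: pos; rewrite /D addnS.
exists (4 * C * INR a ^ d + C * INR D ^ d); split.
  have := pow_lt _ d Pa; have := pow_lt _ d PD; nra.
move=> d1 n V delta k d1a d1b n1 cs vc dl dn k1 kn dk.
set P := Rpower (INR n) d1 * Rpower (INR k) (INR d - d1).
have PP : 0 < P by rewrite /P; apply: Rmult_lt_0_compat; apply: exp_pos.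
have Pd : 0 < INR delta by apply: pos.
have Pdd : 0 < INR delta ^ d by apply: pow_lt.
have Pn : 0 < INR n by apply: pos.
have dn2 : (2 * delta <= n)%N.
  have h2 : 2 <= 2 ^ (d0 + 1).
    rewrite addn1 /=; have := pow_R1_Rle 2 d0; lra.
  have : INR delta * 2 <= INR n.
    have hp : 0 < 2 ^ (d0 + 1) by apply: pow_lt; lra.
    apply: Rle_trans (_ : INR delta * 2 ^ (d0 + 1) <= _).
      by apply: Rmult_le_compat_l; lra.
    move: dn; rewrite /Rdiv => dn.
    have := Rmult_le_compat_r (2 ^ (d0 + 1)) _ _ (Rlt_le _ _ hp) dn.
    by rewrite Rmult_assoc Rinv_l ?Rmult_1_r; lra.
  rewrite -(mult_INR delta 2) => h; apply/leP; rewrite mulnC; exact: INR_le.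
set Pr := fun W : {set {set 'I_n}} =>
  (W \subset V) && separated delta W && [forall v in W, (vlen v <= k)%N].
have ne : (0 < #|[pred W | Pr W]|)%N.
  apply/card_gt0P; exists set0; rewrite inE /Pr sub0set /=.
  apply/andP; split; apply/forallP => x; by rewrite inE.
have [W0 W0P W0E] := eq_bigmax_cond (fun W : {set {set 'I_n}} => #|W|) ne.
have -> : Mpack delta k V = #|W0|.
  rewrite -W0E /Mpack; apply: eq_bigl => W; by [].
move: W0P; rewrite inE /Pr => /andP [/andP [W0V sep] /forallP W0k].
have Wk : forall w, w \in W0 -> (#|w| <= k)%N.
  by move=> w wW; move: (W0k w) => /implyP /(_ wW).
have vcW : forall S : {set 'I_n}, shattered W0 S -> (#|S| <= d0)%N.
  move=> S sh; rewrite -vc; apply: leq_bigmax_cond; exact: shattered_sub W0V sh.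
have nonneg : 0 <= C * INR D ^ d * (P / INR delta ^ d).
  apply: Rmult_le_pos; last by apply: Rlt_le; apply: Rdiv_lt_0_compat.
  by apply: Rmult_le_pos; [lra | apply: pow_le; lra].
have nonneg2 : 0 <= 4 * C * INR a ^ d * (P / INR delta ^ d).
  apply: Rmult_le_pos; last by apply: Rlt_le; apply: Rdiv_lt_0_compat.
  by apply: Rmult_le_pos; [lra | apply: pow_le; lra].
case: (leqP delta D) => hD.
  (* small delta: trivial bound *)
  have sub : W0 \subset [set u in proj V setT | (vlen u <= k)%N].
    apply/subsetP => w wW; rewrite inE Wk // andbT.
    apply/imsetP; exists w; [exact: (subsetP W0V) | by rewrite setIT].
  have kT : (k <= #|[set: 'I_n]|)%N by rewrite cardsT card_ord.
  have := cs setT k k1 kT; rewrite cardsT card_ord => hcs.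
  have h1 : INR #|W0| <= C * P.
    apply: Rle_trans (_ : INR #|[set u in proj V setT | (vlen u <= k)%N]| <= _).
      by apply: le_INR; apply/leP; exact: subset_leq_card.
    by rewrite /P -Rmult_assoc.
  have hDd : INR delta ^ d <= INR D ^ d.
    apply: pow_incr; split; first lra.
    by apply: le_INR; apply/leP.
  have h2 : C * P <= C * INR D ^ d * (P / INR delta ^ d).
    have -> : C * P = C * (INR delta ^ d * (P / INR delta ^ d)) by field; lra.
    rewrite Rmult_assoc; apply: Rmult_le_compat_l; first lra.
    apply: Rmult_le_compat_r; last exact: hDd.
    by apply: Rlt_le; apply: Rdiv_lt_0_compat.
  have -> : (4 * C * INR a ^ d + C * INR D ^ d) * (P / INR delta ^ d) =
    4 * C * INR a ^ d * (P / INR delta ^ d) + C * INR D ^ d * (P / INR delta ^ d) by ring.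
  lra.
pose q := ((4 * d0 * n) %/ delta)%N.
pose m := q.+1.
pose t := ((4 * k * m) %/ n)%N.
pose k' := minn m (maxn 1 t).
have dpos' : (0 < delta)%N by [].
have npos : (0 < n)%N by [].
have e1 := divn_eq (4 * d0 * n) delta.
have e2 := ltn_pmod (4 * d0 * n) dpos'.
have e3 := divn_eq (4 * k * m) n.
have e4 := ltn_pmod (4 * k * m) npos.
rewrite -/q in e1; rewrite -/t in e3.
have hq : (4 * d0 * n <= delta * m.+1)%N by exact: ar1 e1 e2.
have mn : (m <= n)%N by exact: (ar2 _ _ _ _ _ e1 hD dn2).
have dln : (delta <= n)%N by lia.
have hmd : (m * delta <= (4 * d0 + 1) * n)%N by exact: (ar3 _ _ _ _ _ e1 dln).
have hm : (m * delta <= a * n)%N.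
  by apply: leq_trans hmd _; rewrite leq_mul2r; apply/orP; right; rewrite /a; lia.
have htn : (t * delta * n <= (16 * d0 + 4) * k * n)%N.
  have h : (t * n <= 4 * k * m)%N by rewrite e3 leq_addr.
  apply: leq_trans (_ : (4 * k * m) * delta <= _)%N.
    by rewrite mulnAC; apply: leq_mul.
  rewrite -mulnA; apply: leq_trans (_ : 4 * k * ((4 * d0 + 1) * n) <= _)%N.
    by rewrite leq_mul2l hmd orbT.
  by rewrite ar4.
have htd : (t * delta <= (16 * d0 + 4) * k)%N by rewrite leq_pmul2r in htn.
have kmax : (k' <= maxn 1 t)%N by rewrite /k' geq_minr.
have hk' : (k' * delta <= a * k)%N.
  have ak : ((16 * d0 + 4) * k <= a * k)%N by rewrite leq_mul2r /a; apply/orP; right; lia.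
  case: (leqP 1 t) => h1.
    rewrite (maxn_idPr h1) in kmax.
    apply: leq_trans (_ : t * delta <= _)%N; first by rewrite leq_mul2r kmax orbT.
    exact: leq_trans htd ak.
  have : t = 0%N by lia.
  move=> t0; rewrite t0 in kmax; have k'1 : (k' <= 1)%N by [].
  apply: leq_trans (_ : 1 * delta <= _)%N; first by rewrite leq_mul2r k'1 orbT.
  rewrite mul1n; apply: leq_trans dk _; apply: leq_trans ak; rewrite leq_mul2r; apply/orP; right; lia.
have kcond : (m <= k')%N \/ (4 * k * m < n * k'.+1)%N.
  case: (leqP m (maxn 1 t)) => h.
    by left; rewrite /k' (minn_idPl h).
  right; rewrite /k' (minn_idPr (ltnW h)).
  apply: leq_trans (_ : n * t.+1 <= _)%N.
    have : (4 * k * m < t * n + n)%N by rewrite {1}e3 ltn_add2l.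
    by rewrite mulnS addnC [(n * t)%N]mulnC.
  by rewrite leq_mul2l ltnS leq_maxr orbT.
have k'1 : (1 <= k')%N by rewrite /k' /m; lia.
have k'm : (k' <= m)%N by rewrite /k'; lia.
have [I [cI hI]] := main_nat W0V sep vcW hq dpos' Wk kcond mn.
have hcs := cs I k' k'1 (ltac:(by rewrite cI)).
rewrite cI in hcs.
have hrs := real_step C a m k' n k delta d d1 Cpos d1a d1b (ltac:(by [])) k'1 npos k1 dpos'
  (ltac:(by rewrite /a addnS)) hm hk'.
have h4 : INR #|W0| <= 4 * INR #|[set u in proj V I | (vlen u <= k')%N]|.
  have := le_INR _ _ (leP hI); rewrite mult_INR.
  by have -> : INR 4 = 4 by simpl; lra.
have -> : (4 * C * INR a ^ d + C * INR D ^ d) * (P / INR delta ^ d) =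
  4 * (C * (INR a ^ d / INR delta ^ d) * P) + C * INR D ^ d * (P / INR delta ^ d)
  by field; lra.
rewrite -/P in hrs; lra.
Qed.
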